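(* Let $O$ be a random vector containing $Z$, let $S_{ab}$ be a known function of $O$, and let $h\mapsto m_a(O,h)$ be a map that is linear a.s. on $L_2(P_{Z})$ with $h\mapsto E[m_a(O,h)]$ continuous. Assume there is a linear map $h\mapsto m_a^\ddagger(o,h)$ on $L_2(P_Z)$ such that $h\mapsto E[m_a^\ddagger(O,h)]$ is continuous with Riesz representer $\mathcal R_a^\ddagger(Z)$, $|m_a(o,h)|\le m_a^\ddagger(o,|h|)$ for all $o$ and all $h\in L_2(P_Z)$, and $E[(\mathcal R_a^\ddagger)^2]\le K$. Assume $a\in\mathcal G_n(\phi,s_a,2,\varphi)$ with associated parameter $\theta_a^*$, where $s_a\log(p)/\sqrt n\to0$, and let $r(Z)=a(Z)-\varphi(\langle\theta^*_a,\phi(Z)\rangle)$. Let $h$ be such that $E[(S_{ab}h)^2]\le K$. Then $\sqrt n\,E\big[|S_{ab}h\,r+m_a(O,r)|\big]\to0$.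
   Context: Asymptotics are in $n$ and all quantities may depend on $n$; $K$ is a fixed positive constant. $\phi(Z)=(\phi_1(Z),\dots,\phi_p(Z))^\top$, $p=p(n)$. $\mathcal G_n(\phi,s,j,\varphi)$ is the set of functions $c(Z)$ for which there exist $\theta^*\in\mathbb R^p$ with $\|\theta^*\|_0\le s$ and $r(Z)$ with $c(Z)=\varphi(\langle\theta^*,\phi(Z)\rangle)+r(Z)$ and $E[r(Z)^2]\le K(s\log(p)/n)^j$; $\theta^*$ is the associated parameter. *)

(* Defs.v *)
From HB Require Import structures.
From mathcomp Require Import all_boot all_order all_algebra.
From mathcomp Require Import all_classical all_reals all_analysis.
Set Implicit Arguments. Unset Strict Implicit. Unset Printing Implicit Defensive.
Import Order.TTheory GRing.Theory Num.Theory numFieldNormedType.Exports.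
Local Open Scope classical_set_scope.
Local Open Scope ring_scope.

Section defs.
Context {d : measure_display} {T : measurableType d} {R : realType} {ZT : Type}.
(* T : sample space of O, P : law of O, Z : the component Z of O. *)
Variables (P : probability T R) (Z : T -> ZT).

Definition L2Z (h : ZT -> R) : Prop :=
  measurable_fun setT (h \o Z) /\ (\int[P]_x ((h (Z x)) ^+ 2)%:E < +oo)%E.

Definition linear_as (m : T -> (ZT -> R) -> R) : Prop :=
  forall (h1 h2 : ZT -> R) (c : R), L2Z h1 -> L2Z h2 ->
    {ae P, forall x, m x (fun z => h1 z + h2 z) = m x h1 + m x h2} /\
    {ae P, forall x, m x (fun z => c * h1 z) = c * m x h1}.

Definition linear_pw (m : T -> (ZT -> R) -> R) : Prop :=
  forall (x : T) (h1 h2 : ZT -> R) (c : R), L2Z h1 -> L2Z h2 ->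
    m x (fun z => h1 z + h2 z) = m x h1 + m x h2 /\
    m x (fun z => c * h1 z) = c * m x h1.

Definition mean_defined (m : T -> (ZT -> R) -> R) : Prop :=
  forall h, L2Z h -> P.-integrable setT (fun x => (m x h)%:E).

Definition mean_continuous (m : T -> (ZT -> R) -> R) : Prop :=
  mean_defined m /\
  forall (h : ZT -> R) (hk : nat -> ZT -> R), L2Z h -> (forall k, L2Z (hk k)) ->
    (fun k => (\int[P]_x (((hk k (Z x) - h (Z x)) ^+ 2)%:E))%E) @ \oo --> 0%E ->
    (fun k : nat => Rintegral P setT (fun x => m x (hk k))) @ \oo
      --> (Rintegral P setT (fun x => m x h)).

Definition riesz_representer (m : T -> (ZT -> R) -> R) (Rr : ZT -> R) : Prop :=
  L2Z Rr /\
  forall h, L2Z h ->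
    Rintegral P setT (fun x => m x h) = Rintegral P setT (fun x => Rr (Z x) * h (Z x)).

Definition inner (p : nat) (theta v : 'I_p -> R) : R := \sum_(i < p) theta i * v i.
Definition l0 (p : nat) (theta : 'I_p -> R) : nat := #|[pred i : 'I_p | theta i != 0]|.

Definition Gn_param (K : R) (n p : nat) (phi : ZT -> 'I_p -> R) (s j : nat)
    (varphi : R -> R) (c : ZT -> R) (theta : 'I_p -> R) : Prop :=
  (l0 theta <= s)%N /\
  measurable_fun setT (fun x => c (Z x) - varphi (inner theta (phi (Z x)))) /\
  (\int[P]_x (((c (Z x) - varphi (inner theta (phi (Z x)))) ^+ 2)%:E)
     <= (K * ((s%:R * ln p%:R / n%:R) ^+ j))%:E)%E.

Definition in_Gn (K : R) (n p : nat) (phi : ZT -> 'I_p -> R) (s j : nat)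
    (varphi : R -> R) (c : ZT -> R) : Prop :=
  exists theta, Gn_param K n phi s j varphi c theta.

End defs.

(* Main.v *)
Require Import Defs.
From HB Require Import structures.
From mathcomp Require Import all_boot all_order all_algebra.
From mathcomp Require Import all_classical all_reals all_analysis.
From mathcomp Require Import ring lra measurable_realfun.
Import Order.TTheory GRing.Theory Num.Theory numFieldNormedType.Exports.
Local Open Scope classical_set_scope.
Local Open Scope ring_scope.

Lemma amgm_pt (R : realType) (t a b : R) : 0 < t ->
  `|a * b| <= t / 2 * a ^+ 2 + 1 / (2 * t) * b ^+ 2.
Proof.
move=> t0.
have tn : t != 0 by rewrite gt_eqF.
have H : t / 2 * a ^+ 2 + 1 / (2 * t) * b ^+ 2 - `|a| * `|b|
   = (t * `|a| - `|b|) ^+ 2 / (2 * t).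
  rewrite -[a ^+ 2](real_normK (num_real a)) -[b ^+ 2](real_normK (num_real b)).
  by field.
have : 0 <= (t * `|a| - `|b|) ^+ 2 / (2 * t).
  by apply: divr_ge0; [exact: sqr_ge0| apply: mulr_ge0 => //; exact: ltW].
rewrite -H normrM subr_ge0 //.
Qed.

Lemma fine_le_abs (R : realType) (x y : \bar R) :
  (`|x| <= y)%E -> (0 <= y)%E -> ((fine x)%:E <= y)%E.
Proof.
case: x => [x| |] //= H y0.
by apply: le_trans H; rewrite lee_fin ler_norm.
Qed.

Lemma amgm_int d (T : measurableType d) (R : realType) (mu : {measure set T -> \bar R})
  (F G : T -> R) (t : R) : 0 < t ->
  measurable_fun setT F -> measurable_fun setT G ->
  (\int[mu]_x (`|F x * G x|)%:E <=
    (t / 2)%:E * \int[mu]_x ((F x) ^+ 2)%:E + (1 / (2 * t))%:E * \int[mu]_x ((G x) ^+ 2)%:E)%E.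
Proof.
move=> t0 mF mG.
have mF2 : measurable_fun setT (fun x => (F x) ^+ 2) by exact: measurable_funX.
have mG2 : measurable_fun setT (fun x => (G x) ^+ 2) by exact: measurable_funX.
rewrite -ge0_integralZl_EFin //; last 3 first.
- by move=> x _; rewrite lee_fin sqr_ge0.
- exact/measurable_EFinP.
- by apply: divr_ge0 => //; exact: ltW.
rewrite -ge0_integralZl_EFin //; last 3 first.
- by move=> x _; rewrite lee_fin sqr_ge0.
- exact/measurable_EFinP.
- by apply: divr_ge0 => //; apply: mulr_ge0 => //; exact: ltW.
rewrite -ge0_integralD //; last 4 first.
- by move=> x _; rewrite -EFinM lee_fin mulr_ge0 ?sqr_ge0 // divr_ge0 // ltW.
- apply/measurable_EFinP; exact: measurable_funM.
- by move=> x _; rewrite -EFinM lee_fin mulr_ge0 ?sqr_ge0 // divr_ge0 // mulr_ge0 // ltW.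
- apply/measurable_EFinP; exact: measurable_funM.
apply: ge0_le_integral => //.
- apply/measurable_EFinP; apply: measurableT_comp => //; exact: measurable_funM.
- apply: emeasurable_funD; apply: emeasurable_funM => //; exact/measurable_EFinP.
- by move=> x _; rewrite -!EFinM -EFinD lee_fin amgm_pt.
Qed.

Lemma key d (T : measurableType d) (R : realType) (ZT : Type)
  (P : probability T R) (Z : T -> ZT) (K c : R) (f : T -> R) (r : ZT -> R)
  (m mdd : T -> (ZT -> R) -> R) (Rdd : ZT -> R) :
  0 < K ->
  mean_defined P Z m -> mean_defined P Z mdd -> riesz_representer P Z mdd Rdd ->
  (forall x g, L2Z P Z g -> `|m x g| <= mdd x (fun z => `|g z|)) ->
  (\int[P]_x ((Rdd (Z x)) ^+ 2)%:E <= K%:E)%E ->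
  measurable_fun setT (fun x => r (Z x)) ->
  (\int[P]_x ((r (Z x)) ^+ 2)%:E <= (K * c ^+ 2)%:E)%E ->
  measurable_fun setT f ->
  (\int[P]_x ((f x) ^+ 2)%:E <= K%:E)%E ->
  (\int[P]_x (`|f x * r (Z x) + m x r|)%:E <= (2 * K * `|c|)%:E)%E.
Proof.
move=> K0 mdef mdddef [L2R riesz] Hbd HR mr Hr mf Hf.
have L2r : L2Z P Z r by split => //; exact: (le_lt_trans Hr (ltry _)).
have L2ar : L2Z P Z (fun z => `|r z|).
  split; first by apply: (measurableT_comp (@normr_measurable R setT)) mr.
  under eq_integral do rewrite /= real_normK ?num_real //.
  exact: L2r.2.
have mm : measurable_fun setT (fun x => m x r).
  by have /integrableP[/measurable_EFinP ? _] := mdef r L2r.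
have iM := mdddef _ L2ar.
have mM : measurable_fun setT (fun x => mdd x (fun z => `|r z|)).
  by have /integrableP[/measurable_EFinP ? _] := iM.
have M0 x : 0 <= mdd x (fun z => `|r z|) by exact: le_trans (normr_ge0 _) (Hbd x r L2r).
have mRdd : measurable_fun setT (fun x => Rdd (Z x)) by case: L2R.
have step1 : (\int[P]_x (`|f x * r (Z x) + m x r|)%:E <=
    \int[P]_x (`|f x * r (Z x)|)%:E + \int[P]_x (mdd x (fun z => `|r z|))%:E)%E.
  rewrite -ge0_integralD //; last 3 first.
  - apply/measurable_EFinP; apply: measurableT_comp => //; exact: measurable_funM.
  - by move=> x _; rewrite lee_fin.
  - exact/measurable_EFinP.
  apply: ge0_le_integral => //.
  - apply/measurable_EFinP; apply: measurableT_comp => //.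
    by apply: measurable_funD => //; exact: measurable_funM.
  - apply: emeasurable_funD; apply/measurable_EFinP => //.
    apply: measurableT_comp => //; exact: measurable_funM.
  - move=> x _; rewrite -EFinD lee_fin.
    apply: le_trans (ler_normD _ _) _; rewrite lerD2l; exact: Hbd.
have step2 : (\int[P]_x (mdd x (fun z => `|r z|))%:E <= \int[P]_x (`|Rdd (Z x) * r (Z x)|)%:E)%E.
  have fin := integrable_fin_num measurableT iM.
  rewrite -(fineK fin) -/(Rintegral _ _ _) riesz //.
  apply: fine_le_abs; last exact: integral_ge0.
  apply: le_trans (le_abse_integral _ _ _) _ => //.
    apply/measurable_EFinP; apply: measurable_funM => //.
    exact: (measurableT_comp (@normr_measurable R setT)) mr.
  apply: ge0_le_integral => //.
  - apply/measurable_EFinP; apply: measurableT_comp => //; apply: measurable_funM => //.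
    exact: (measurableT_comp (@normr_measurable R setT)) mr.
  - apply/measurable_EFinP; apply: measurableT_comp => //; exact: measurable_funM.
  - by move=> x _ /=; rewrite !normrM normr_id.
apply: le_trans (step1) _.
have bnd t : 0 < t -> (\int[P]_x (`|f x * r (Z x)|)%:E + \int[P]_x (mdd x (fun z => `|r z|))%:E
   <= (t * K + K * c ^+ 2 / t)%:E)%E.
  move=> t0.
  apply: le_trans (leeD2l _ step2) _.
  apply: le_trans (leeD (@amgm_int _ _ _ P _ _ t t0 mf mr) (@amgm_int _ _ _ P _ _ t t0 mRdd mr)) _.
  have a0 : (0 <= (t / 2)%:E)%E by rewrite lee_fin divr_ge0 // ltW.
  have b0 : (0 <= (1 / (2 * t))%:E)%E by rewrite lee_fin divr_ge0 // mulr_ge0 // ltW.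
  apply: le_trans (leeD (leeD (lee_wpmul2l a0 Hf) (lee_wpmul2l b0 Hr))
                        (leeD (lee_wpmul2l a0 HR) (lee_wpmul2l b0 Hr))) _.
  rewrite -!EFinM -!EFinD lee_fin.
  have tn : t != 0 by rewrite gt_eqF.
  rewrite le_eqVlt; apply/orP; left; apply/eqP; by field; rewrite ?tn ?pnatr_eq0.
apply/lee_addgt0Pr => e e0.
have eK : 0 < e / K by exact: divr_gt0.
have t0 : 0 < `|c| + e / K by apply: ltr_wpDl.
apply: le_trans (bnd _ t0) _.
rewrite -EFinD lee_fin.
have Kn : K != 0 by rewrite gt_eqF.
have E1 : (`|c| + e / K) * K = K * `|c| + e by field.
have E2 : c ^+ 2 / (`|c| + e / K) <= `|c|.
  rewrite ler_pdivrMr // -(real_normK (num_real c)).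
  have := normr_ge0 c; nra.
have : K * (c ^+ 2 / (`|c| + e / K)) <= K * `|c| by rewrite ler_pM2l.
rewrite E1 mulrA; lra.
Qed.
Theorem lemma9 (d : measure_display) (T : measurableType d) (R : realType) (ZT : Type)
  (K : R) (P : nat -> probability T R) (Z : T -> ZT)
  (S : nat -> T -> R) (m mdd : nat -> T -> (ZT -> R) -> R) (Rdd : nat -> ZT -> R)
  (p : nat -> nat) (phi : forall n, ZT -> 'I_(p n) -> R) (varphi : nat -> R -> R)
  (sa : nat -> nat) (a : nat -> ZT -> R) (theta : forall n, 'I_(p n) -> R)
  (h : nat -> ZT -> R) :
  0 < K ->
  (forall n, (0 < n)%N ->
     linear_as (P n) Z (m n) /\ mean_continuous (P n) Z (m n)) ->
  (forall n, (0 < n)%N ->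
     [/\ linear_pw (P n) Z (mdd n), mean_continuous (P n) Z (mdd n)
       & riesz_representer (P n) Z (mdd n) (Rdd n)]) ->
  (forall n, (0 < n)%N -> forall (x : T) (g : ZT -> R), L2Z (P n) Z g ->
     `|m n x g| <= mdd n x (fun z => `|g z|)) ->
  (forall n, (0 < n)%N -> (\int[P n]_x ((Rdd n (Z x)) ^+ 2)%:E <= K%:E)%E) ->
  (forall n, (0 < n)%N ->
     Gn_param (P n) Z K n (phi n) (sa n) 2 (varphi n) (a n) (theta n)) ->
  (fun n : nat => (sa n)%:R * ln ((p n)%:R : R) / Num.sqrt (n%:R : R)) @ \oo --> (0 : R) ->
  (forall n, (0 < n)%N ->
     measurable_fun setT (fun x => S n x * h n (Z x)) /\
     (\int[P n]_x ((S n x * h n (Z x)) ^+ 2)%:E <= K%:E)%E) ->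
  let r n z := a n z - varphi n (inner (theta n) (phi n z)) in
  (fun n => ((Num.sqrt (n%:R : R))%:E *
     \int[P n]_x (`|S n x * h n (Z x) * r n (Z x) + m n x (r n)|)%:E)%E)
    @ \oo --> 0%E.
Proof.
move=> K0 Hm Hmdd Hbd HR HG He HSh r.
set e := fun n : nat => (sa n)%:R * ln ((p n)%:R : R) / Num.sqrt (n%:R : R).
apply: (squeeze_cvge (f := fun _ => 0%E) (h := fun n => (2 * K * `|e n|)%:E)).
- near=> n.
  have n0 : (0 < n)%N by near: n; exact: nbhs_infty_gt.
  apply/andP; split.
    by apply: mule_ge0; [rewrite lee_fin sqrtr_ge0 | exact: integral_ge0].
  have [Hl Hmc] := Hm n n0.
  have [_ Hmddc Hrr] := Hmdd n n0.
  have [_ [mr Hr]] := HG n n0.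
  have [mSh HSh2] := HSh n n0.
  have := @key _ _ _ _ (P n) Z K ((sa n)%:R * ln ((p n)%:R : R) / n%:R)
    (fun x => S n x * h n (Z x)) (r n) (m n) (mdd n) (Rdd n) K0 Hmc.1 Hmddc.1 Hrr
    (Hbd n n0) (HR n n0) mr Hr mSh HSh2.
  move=> Hk.
  have sq0 : (0 <= (Num.sqrt (n%:R : R))%:E)%E by rewrite lee_fin sqrtr_ge0.
  apply: le_trans (lee_wpmul2l sq0 Hk) _.
  rewrite -EFinM lee_fin.
  have sn : Num.sqrt (n%:R : R) ^+ 2 = n%:R by rewrite sqr_sqrtr // ler0n.
  have sp : 0 < Num.sqrt (n%:R : R) by rewrite sqrtr_gt0 ltr0n.
  have spn : Num.sqrt (n%:R : R) != 0 by rewrite gt_eqF.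
  have -> : e n = Num.sqrt (n%:R : R) * ((sa n)%:R * ln ((p n)%:R : R) / n%:R).
    have key2 : forall (s u : R), s != 0 -> u / s = s * (u / s ^+ 2).
      by move=> s u s0; field.
    by rewrite /e (key2 _ _ spn) sn.
  rewrite (normrM (Num.sqrt (n%:R : R))) (ger0_norm (ltW sp)) le_eqVlt; apply/orP; left; apply/eqP.
  by rewrite mulrCA mulrA.
- exact: cvg_cst.
- apply: cvg_EFin; first by near=> n.
  have : (fun n => `|e n|) @ \oo --> (0 : R) by apply/norm_cvg0P.
  move=> /(@cvgMr _ _ _ _ _ (2 * K) _); rewrite mulr0.
  by apply: cvg_trans; apply: near_eq_cvg; near=> n.
Unshelve. all: end_near.
Qed.
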